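(* If $G$ is a connected, nontraceable detour graph, then $\tau(G)\ge 9$. (In particular such a graph has at least $10$ vertices.)
   Context: All graphs are finite and simple. The order of a path is its number of vertices. For a vertex $v$ of $G$, $\tau(v)$ is the order of a longest path in $G$ having $v$ as an endvertex, and $\tau(G)$ is the order of a longest path in $G$. A graph is nontraceable if it has no path containing all its vertices. A detour graph is a graph in which all vertices have the same value of $\tau(v)$. *)

(* Defs.v *)
From mathcomp Require Import all_boot.
Set Implicit Arguments. Unset Strict Implicit. Unset Printing Implicit Defensive.

Definition simple_graph (T : finType) (e : rel T) : Prop :=
  symmetric e /\ irreflexive e.

Definition gpath (T : finType) (e : rel T) (s : seq T) : bool :=
  match s with
  | [::] => false
  | x :: s' => path e x s' && uniq s
  end.

Definition endvertex (T : finType) (v : T) (s : seq T) : bool :=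
  (s != [::]) && ((head v s == v) || (last v s == v)).

(* tau(v): the order of a longest path having v as an endvertex.
   Paths have order at most #|T|, so we take the max over n <= #|T|. *)
Definition tau_v (T : finType) (e : rel T) (v : T) : nat :=
  \max_(n < #|T|.+1 | [exists t : n.-tuple T, gpath e t && endvertex v t]) n.

Definition tau_G (T : finType) (e : rel T) : nat :=
  \max_(n < #|T|.+1 | [exists t : n.-tuple T, gpath e t]) n.

(* connected graph: nonempty (graphs have a nonempty vertex set) and any two
   vertices are joined by a walk *)
Definition connected (T : finType) (e : rel T) : Prop :=
  0 < #|T| /\ forall x y : T, connect e x y.

Definition nontraceable (T : finType) (e : rel T) : Prop :=
  ~ exists s : seq T, gpath e s /\ (forall x : T, x \in s).

Definition detour_graph (T : finType) (e : rel T) : Prop :=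
  forall u v : T, tau_v e u = tau_v e v.

(* Main.v *)
Require Import Defs.
From Stdlib Require Import PeanoNat.
From mathcomp Require Import all_boot zify.
Set Implicit Arguments. Unset Strict Implicit. Unset Printing Implicit Defensive.

Definition adjT := seq (seq nat).
Definition nbr (adj : adjT) v := nth [::] adj v.

Fixpoint memn (x : nat) (l : seq nat) : bool :=
  match l with [::] => false | y :: l' => if eqn x y then true else memn x l' end.

(* extend p (head = current end) by fuel more vertices *)
Fixpoint ext (adj : adjT) (fuel : nat) (p : seq nat) {struct fuel} : option (seq nat) :=
  match fuel with 0 => Some p | fuel'.+1 =>
    let fix loop (l : seq nat) := match l with [::] => None
      | u :: l' => if memn u p then loop l' else
                   match ext adj fuel' (u :: p) with Some q => Some q | None => loop l' end end
    in loop (nbr adj (head 0 p)) end.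

Fixpoint side (adj : adjT) (L : nat) (fuel : nat) (u : nat) (B : seq nat) (lb : nat) {struct fuel} : option (seq nat) :=
  match ext adj (L - lb.+1) (u :: rev B) with Some q => Some q | None =>
  match fuel with 0 => None | f'.+1 =>
    let fix loop (l : seq nat) := match l with [::] => None
      | w :: l' => if memn w B then loop l' else if eqn w u then loop l' else
                   match side adj L f' u (w :: B) lb.+1 with Some q => Some q | None => loop l' end end
    in loop (nbr adj (head 0 B)) end end.

Definition add_edge (adj : adjT) v u : adjT :=
  if memn u (nbr adj v) then adj else
  let adj1 := if eqn u (size adj) then rcons adj [::] else adj in
  let adj2 := set_nth [::] adj1 v (u :: nbr adj1 v) in
  set_nth [::] adj2 u (v :: nbr adj2 u).

Definition valid (adj : adjT) (L : nat) (q : seq nat) : bool :=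
  match q with [::] => false | a :: q' =>
   [&& path (fun x y => y \in nbr adj x) a q', uniq q, all (fun x => x < size adj) q & L <= size q] end.

Definition checkedge adj L v u :=
  match side adj L L u [:: v] 1 with Some q => valid adj L q | None => false end.

Fixpoint allv (f : nat -> bool) (l : seq nat) : bool :=
  match l with [::] => true | x :: l' => if f x then allv f l' else false end.
Fixpoint hasv (f : nat -> bool) (l : seq nat) : bool :=
  match l with [::] => false | x :: l' => if f x then true else hasv f l' end.

Definition cands adj L := sort (fun x y => size (nbr adj y) <= size (nbr adj x))
   [seq x <- iota 0 (size adj) | if ext adj L.-1 [:: x] is None then true else false].

Fixpoint advr (W : adjT -> bool) (L : nat) (adj : adjT) (v : nat) (vis : seq nat) (r : nat) {struct r} : bool :=
  match r with 0 => W adj | r'.+1 =>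
   allv (fun u => if memn u vis then true else
                  let adj' := add_edge adj v u in
                  if checkedge adj' L.+1 v u then true else advr W L adj' u (u :: vis) r')
       (iota 0 (size adj).+1) end.

Fixpoint win (L : nat) (d : nat) (adj : adjT) {struct d} : bool :=
  match d with 0 => false | d'.+1 =>
    hasv (fun x => advr (win L d') L adj x [:: x] L.-1) (cands adj L) end.

Definition symok (adj : adjT) : bool :=
  allv (fun a => allv (fun b => memn ((size adj).-1 - b) (nbr adj ((size adj).-1 - a))) (nbr adj a))
       (iota 0 (size adj)).

Definition moveb (L d : nat) (adj : adjT) : bool :=
  if size adj <= L then if 0 < size adj then if symok adj then
    allv (fun i => if Nat.ltb (i + i) (size adj) then
                   let adj' := add_edge adj i (size adj) in
                   if checkedge adj' L.+1 i (size adj) then true else win L d adj'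
                   else true)
         (iota 0 (size adj))
  else false else false else false.

Definition root (L d : nat) : bool := advr (moveb L d) L [:: [::]] 0 [:: 0] L.-1.

Lemma allvP f l x : allv f l -> x \in l -> f x.
Proof.
elim: l => //= y l IH; case H: (f y) => // Hl; rewrite inE => /orP[/eqP->//|]; exact: IH.
Qed.

Lemma hasvP f l : hasv f l -> exists2 x, x \in l & f x.
Proof.
elim: l => //= y l IH; case H: (f y) => Hh.
  by exists y; rewrite ?inE ?eqxx.
have [x Hx Hf] := IH Hh.
by exists x; rewrite // inE Hx orbT.
Qed.

Lemma eqnE' x y : eqn x y = (x == y).
Proof. by []. Qed.

Lemma memnE x l : memn x l = (x \in l).
Proof. by elim: l => //= y l IH; rewrite inE -IH eqnE'; case: (x == y). Qed.

Lemma nbr_add adj v u a b : b \in nbr (add_edge adj v u) a ->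
  b \in nbr adj a \/ (a = v /\ b = u) \/ (a = u /\ b = v).
Proof.
rewrite /add_edge memnE eqnE'; case: ifP => [_|_]; first by left.
have E1 : forall c, nbr (if u == size adj then rcons adj [::] else adj) c = nbr adj c.
  move=> c; case: ifP => // _; rewrite /nbr nth_rcons; case: ltnP => // Hc.
  by rewrite if_same nth_default.
set adj1 := (if _ then _ else _) in E1 *.
rewrite /nbr !nth_set_nth /= -!/(nbr _ _) !E1.
case: (eqVneq a u) => [->|Hau].
  rewrite inE => /orP[/eqP->|]; first by right; right.
  case: (eqVneq u v) => [->|]; last by left.
  by rewrite inE => /orP[/eqP->|]; [right; left | left].
rewrite /nbr nth_set_nth /= -/(nbr _ _) -/(nbr _ _) E1.
case: (eqVneq a v) => [->|_]; last by left.
by rewrite inE => /orP[/eqP->|]; [right; left | left].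
Qed.

Lemma size_add adj v u : v < size adj -> u <= size adj ->
  (u \in nbr adj v -> u < size adj) ->
  size (add_edge adj v u) = maxn (size adj) u.+1.
Proof.
move=> Hv Hu Hn; rewrite /add_edge memnE eqnE'; case: ifP => [/Hn Hl|_].
  by rewrite (maxn_idPl Hl).
rewrite !size_set_nth.
case: (eqVneq u (size adj)) => [Eu|Nu].
  by rewrite size_rcons -Eu; lia.
by lia.
Qed.

Section Game.
Variables (T : finType) (e : rel T) (k : nat).
Hypothesis Hsym : symmetric e.
Hypothesis H1 : forall s, gpath e s -> size s <= k.

Definition real (f : nat -> T) (adj : adjT) :=
  (forall i j, i < size adj -> j < size adj -> f i = f j -> i = j) /\
  (forall a b, b \in nbr adj a -> [/\ a < size adj, b < size adj & e (f a) (f b)]).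

Lemma valid_false f adj q : real f adj -> valid adj k.+1 q -> False.
Proof.
case=> Hinj Hadj; case: q => // a q /and4P[Hp Hu Ha Hs].
have Hg : gpath e (map f (a :: q)).
  change (path e (f a) (map f q) && uniq (map f (a :: q))).
  rewrite map_inj_in_uniq.
    rewrite Hu andbT path_map; by apply: sub_path Hp => x y /Hadj[].
  move=> x y Hx Hy; apply: Hinj; [exact: (allP Ha) | exact: (allP Ha)].
by have := H1 Hg; rewrite size_map; lia.
Qed.

Lemma checkedge_false f adj v u : real f adj -> checkedge adj k.+1 v u -> False.
Proof.
move=> Hr; rewrite /checkedge; case: side => // q; exact: valid_false Hr.
Qed.

Lemma real_add f f' adj v u : real f adj -> v < size adj -> u <= size adj ->
  (forall i, i < size adj -> f' i = f i) ->
  (u = size adj -> forall i, i < size adj -> f' i <> f' u) ->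
  e (f' v) (f' u) -> real f' (add_edge adj v u).
Proof.
case=> Hinj Hadj Hv Hu Hag Hnew He.
have Hs : size (add_edge adj v u) = maxn (size adj) u.+1.
  by apply: size_add => // /Hadj[].
split.
  rewrite Hs => i j Hi Hj.
  case: (ltnP i (size adj)) => Hi'; case: (ltnP j (size adj)) => Hj'.
  - by rewrite !Hag //; apply: Hinj.
  - have Ej : j = u by lia.
    have Eu : u = size adj by lia.
    by rewrite Ej => /Hnew -/(_ Eu Hi').
  - have Ei : i = u by lia.
    have Eu : u = size adj by lia.
    by rewrite Ei => E; have := Hnew Eu _ Hj'; rewrite E.
  - lia.
move=> a b /nbr_add[|[[-> ->]|[-> ->]]].
- by move=> /Hadj[Ha Hb Hab]; rewrite Hs !Hag //; split => //; lia.
- by rewrite Hs; split => //; lia.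
- by rewrite Hs Hsym; split => //; lia.
Qed.

Section Adv.
Variable W : adjT -> bool.
Hypothesis HW : forall f adj, real f adj -> W adj -> False.

Lemma advr_sound rest : forall adj f v vis, real f adj -> v < size adj ->
  all (fun x => x < size adj) vis -> path e (f v) rest ->
  uniq (map f vis ++ rest) -> advr W k adj v vis (size rest) -> False.
Proof.
elim: rest => [|y rest IH] adj f v vis Hr Hv Hvis Hp Hu.
  move=> H; change (W adj = true) in H; exact: HW Hr H.
have [Hinj Hadj] := Hr.
have /andP[Hvy {}Hp] : e (f v) y && path e y rest := Hp.
change (advr W k adj v vis (size rest).+1 = true -> False).
have Hy : y \notin map f vis.
  by move: Hu; rewrite cat_uniq => /and3P[_ /hasPn /(_ y (mem_head _ _)) /= ->].
have Hu' : uniq (y :: map f vis ++ rest).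
  by move: Hu; rewrite -cat1s uniq_catCA.
have [u [f' [Hui Hf'u Hag Hnew Huv]]] : exists u f', [/\ u \in iota 0 (size adj).+1,
    f' u = y, (forall i, i < size adj -> f' i = f i),
    (u = size adj -> forall i, i < size adj -> f' i <> f' u) & u \notin vis].
  case: (boolP (y \in map f (iota 0 (size adj)))) => [/mapP[i Hi Ey]|Hn].
    exists i, f; split.
    - by move: Hi; rewrite !mem_iota /=; lia.
    - by rewrite Ey.
    - by [].
    - by move: Hi; rewrite mem_iota => /andP[_ Hi] Ei; move: Hi; rewrite Ei ltnn.
    - by apply: contra Hy => Hiv; rewrite Ey map_f.
  exists (size adj), (fun j => if j == size adj then y else f j); split.
  - by rewrite mem_iota /=.
  - by rewrite eqxx.
  - by move=> i Hi; rewrite (ltn_eqF Hi).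
  - move=> _ i Hi; rewrite (ltn_eqF Hi) eqxx => Ef; move: Hn; rewrite -Ef.
    by rewrite map_f // mem_iota.
  - by apply/negP => /(allP Hvis); rewrite ltnn.
move: (Hui); rewrite mem_iota /= add0n ltnS => Hul.
move=> H; have := @allvP _ (iota 0 (size adj).+1) u H Hui; rewrite memnE (negbTE Huv).
have Hr' : real f' (add_edge adj v u).
  by apply: (real_add Hr Hv Hul Hag Hnew); rewrite Hag // Hf'u.
case: ifP => [/(checkedge_false Hr') //|_].
have Hs' : size (add_edge adj v u) = maxn (size adj) u.+1.
  by rewrite size_add //; move=> /Hadj[].
have Hs : size adj <= size (add_edge adj v u) by rewrite Hs'; lia.
apply: (IH _ _ _ _ Hr').
- by rewrite Hs'; lia.
- rewrite /= Hs' leq_max ltnSn orbT /=.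
  apply/allP => x /(allP Hvis) Hx; rewrite -Hs'; exact: leq_trans Hx Hs.
- by rewrite Hf'u.
- rewrite /= Hf'u; suff -> : map f' vis = map f vis by [].
  by apply/eq_in_map => x /(allP Hvis) /Hag.
Qed.
End Adv.

Hypothesis H2 : forall x, exists s, [/\ gpath e s, size s = k & head x s = x].
Hypothesis Hconn : forall x y, connect e x y.
Hypothesis Hbig : k < #|T|.

Lemma win_sound d : forall f adj, real f adj -> win k d adj -> False.
Proof.
elim: d => [//|d IH] f adj Hr.
change (hasv (fun x => advr (win k d) k adj x [:: x] k.-1) (cands adj k) -> False).
move=> /hasvP[x Hx Ha].
move: Hx; rewrite /cands mem_sort mem_filter mem_iota add0n => /andP[_ /andP[_ Hx]].
have [[|a rest] [Hg Hs Hh]] := H2 (f x) => //.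
move: Hg; rewrite /gpath => /andP[Hp Hu].
rewrite /= in Hh; subst a.
have Hs' : size rest = k.-1 by rewrite -Hs.
by apply: (advr_sound IH (rest := rest) (vis := [:: x]) Hr Hx); rewrite /= ?Hx ?Hs'.
Qed.

Lemma leave (S : pred T) p : forall a, a \in S -> path e a p -> last a p \notin S ->
  exists x z, [/\ x \in S, z \notin S & e x z].
Proof.
elim: p => [|b p IH] a Ha /=; first by rewrite Ha.
case/andP=> Hab Hp Hl; case: (boolP (b \in S)) => Hb.
  exact: (IH b Hb Hp Hl).
by exists a, b.
Qed.

Lemma symok_real f adj : symok adj -> real f adj ->
  real (fun j => f ((size adj).-1 - j)) adj.
Proof.
move=> Hs [Hinj Hadj]; split.
  move=> i j Hi Hj /Hinj; lia.
move=> a b Hb; have [Ha Hb' _] := Hadj _ _ Hb; split => //.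
have Hai : a \in iota 0 (size adj) by rewrite mem_iota.
have := allvP (allvP Hs Hai) Hb; rewrite memnE => /Hadj[_ _ ->] //.
Qed.

Lemma moveb_sound d f adj : real f adj -> moveb k d adj -> False.
Proof.
move=> Hr0; rewrite /moveb; case: ifP => // Hsz; case: ifP => // Hpos.
case: ifP => // Hso Hall.
set S := map f (iota 0 (size adj)).
have [y Hy] : exists y, y \notin S.
  case: (pickP [pred y | y \notin S]) => [y Hy|Hn]; first by exists y.
  have : #|T| <= #|S|.
    apply: subset_leq_card; apply/subsetP => z _; move: (Hn z) => /=.
    by case: (z \in S).
  have := card_size S; rewrite size_map size_iota; lia.
have H0 : f 0 \in S by rewrite map_f // mem_iota.
have /connectP[p Hp Hl] := Hconn (f 0) y.
have Hl' : last (f 0) p \notin S by rewrite -Hl.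
have [x [z [Hx Hz Hxz]]] := leave (S := fun z => z \in S) H0 Hp Hl'.
move: Hx => /mapP[i0 Hi0 Ex].
have Hi0l : i0 < size adj by move: Hi0; rewrite mem_iota.
have [g [j [Hr Hgj Hjj Hjl Hgs]]] : exists g j, [/\ real g adj, g j = x, j + j < size adj,
    j < size adj & forall l, l < size adj -> g l \in S].
  case: (ltnP (i0 + i0) (size adj)) => Hii.
    exists f, i0; split => // l Hll; by rewrite map_f // mem_iota.
  exists (fun j => f ((size adj).-1 - j)), ((size adj).-1 - i0); split.
  - exact: symok_real.
  - by rewrite Ex; congr f; lia.
  - lia.
  - lia.
  - by move=> l Hll; rewrite map_f // mem_iota; lia.
have [Hinj Hadj] := Hr.
have Hj : j \in iota 0 (size adj) by rewrite mem_iota.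
have := allvP Hall Hj => /=.
have -> : Nat.ltb (j + j) (size adj) = true by apply/Nat.ltb_lt/ltP.
have Hr' : real (fun l => if l == size adj then z else g l) (add_edge adj j (size adj)).
  apply: (real_add Hr Hjl (leqnn _)).
  - by move=> l Hll; rewrite (ltn_eqF Hll).
  - move=> _ l Hll; rewrite (ltn_eqF Hll) eqxx => Ef; move: Hz; rewrite -Ef.
    by rewrite Hgs.
  - by rewrite (ltn_eqF Hjl) eqxx Hgj.
case: ifP => [/(checkedge_false Hr') //|_].
exact: win_sound Hr'.
Qed.

Lemma root_sound d : root k d -> False.
Proof.
have /card_gt0P[x0 _] : 0 < #|T| by lia.
have Hr : real (fun _ => x0) [:: [::]].
  split; first by case=> [|[]] // [|[]].
  by move=> [|a] b; rewrite /nbr /= ?nth_nil.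
have [[|a rest] [Hg Hs Hh]] := H2 x0 => //.
move: Hg; rewrite /gpath => /andP[Hp Hu].
rewrite /= in Hh; subst a.
move=> H.
have Hs' : size rest = k.-1 by rewrite -Hs.
apply: (advr_sound (@moveb_sound d) (rest := rest) (v := 0) (vis := [:: 0]) Hr) => //.
by rewrite Hs'.
Qed.

End Game.

Lemma root_ok : all (fun k => root k 2) (iota 1 8).
Proof. vm_cast_no_check (erefl true). Qed.

Lemma gpath_rev (T : finType) (e : rel T) (s : seq T) :
  symmetric e -> gpath e s -> gpath e (rev s).
Proof.
move=> Hsym; case: s => // a q /andP[Hp Hu].
rewrite lastI rev_rcons /gpath -rev_rcons -lastI rev_uniq Hu andbT rev_path.
by apply: sub_path Hp => x y; rewrite /= Hsym.
Qed.

Lemma bigmax_attain m (P : pred 'I_m) :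
  (exists i, P i) -> exists2 i, P i & \max_(n < m | P n) n = i.
Proof.
move=> [i Hi].
have Hpos : 0 < #|P| by apply/card_gt0P; exists i.
have [i0 Hi0 E] := @eq_bigmax_cond _ P (fun n : 'I_m => nat_of_ord n) Hpos.
by exists i0.
Qed.

Unset Implicit Arguments.

Theorem theorem2p4 (T : finType) (e : rel T) :
  simple_graph e -> connected e -> nontraceable e -> detour_graph e ->
  9 <= tau_G e.
Proof.
move=> [Hsym Hirr] [HT Hconn] Hnt Hdet.
have /card_gt0P[x0 _] := HT.
have Hsize : forall s, gpath e s -> size s <= #|T|.
  case=> // a q /andP[_ Hu]; rewrite -(card_uniqP Hu); exact: max_card.
have H1 : forall s, gpath e s -> size s <= tau_G e.
  move=> s Hs; have Hl : size s < #|T|.+1 by rewrite ltnS Hsize.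
  rewrite /tau_G.
  apply: (@leq_bigmax_cond _ (fun n : 'I_#|T|.+1 => [exists t : n.-tuple T, gpath e t])
           (fun n : 'I_#|T|.+1 => nat_of_ord n) (Ordinal Hl)).
  by apply/existsP; exists (in_tuple s).
set k := tau_G e in H1 *.
have Hk1 : 0 < k by apply: (H1 [:: x0]).
have [P HP HPs] : exists2 P, gpath e P & size P = k.
  have [|i0 Hi0 E] := @bigmax_attain _ (fun n : 'I_#|T|.+1 => [exists t : n.-tuple T, gpath e t]).
    have Hl : 1 < #|T|.+1 by rewrite ltnS.
    exists (Ordinal Hl); apply/existsP; exists (in_tuple [:: x0]) => /=.
    by [].
  move: Hi0 => /existsP[t Ht]; exists t => //.
  by rewrite size_tuple /k /tau_G E.
have H2 : forall x, exists s, [/\ gpath e s, size s = k & head x s = x].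
  move=> x.
  have Hv1 : k <= tau_v e (head x0 P).
    have Hl : k < #|T|.+1 by rewrite ltnS -HPs Hsize.
    rewrite /tau_v.
    apply: (@leq_bigmax_cond _ (fun n : 'I_#|T|.+1 =>
        [exists t : n.-tuple T, gpath e t && endvertex (head x0 P) t])
           (fun n : 'I_#|T|.+1 => nat_of_ord n) (Ordinal Hl)).
    apply/existsP => /=.
    have HPt : size P == k by rewrite HPs.
    exists (Tuple HPt); rewrite /= HP /endvertex.
    by case: P HP HPs {HPt} => //= a q _ _; rewrite eqxx.
  rewrite (Hdet (head x0 P) x) in Hv1.
  move: Hv1; rewrite /tau_v.
  have [|i0 Hi0 ->] := @bigmax_attain _ (fun n : 'I_#|T|.+1 =>
        [exists t : n.-tuple T, gpath e t && endvertex x t]).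
    have Hl : 1 < #|T|.+1 by rewrite ltnS.
    exists (Ordinal Hl); apply/existsP; exists (in_tuple [:: x]) => /=.
    by rewrite /endvertex /= eqxx.
  move=> Hki; move: Hi0 => /existsP[t /andP[Ht Hend]].
  have Hst : size t = k.
    by apply/eqP; rewrite eqn_leq H1 // size_tuple.
  move: Hend; rewrite /endvertex => /andP[Hne /orP[Hh|Hl]].
    by exists t; split => //; apply/eqP.
  exists (rev t); split.
  - exact: gpath_rev.
  - by rewrite size_rev.
  - case: (tval t) Hne Hl => // a q _ /eqP E; rewrite -[in RHS]E /=.
    by rewrite lastI rev_rcons.
have Hbig : k < #|T|.
  rewrite ltnNge; apply/negP => Hle; apply: Hnt; exists P; split => //.
  have Hcard : #|P| = #|T|.
    case: P HP HPs {H2} => // a q /andP[_ Hu] Hs.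
    by apply/eqP; rewrite eqn_leq max_card (card_uniqP Hu) Hs.
  move=> x; have /subset_cardP/(_ (subset_predT _)) := Hcard.
  by move=> /(_ x); rewrite inE => ->.
case: (leqP 9 k) => // Hk9; exfalso.
apply: (root_sound Hsym H1 H2 Hconn Hbig (d := 2)).
by apply: (allP root_ok); rewrite mem_iota; lia.
Qed.
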